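(* Let $L=\prod_{i=1}^m p_i^{r_i}$ be an odd integer, where $p_1<p_2<\dots<p_m$ are distinct primes and each $r_i\ge1$. There exists an equi-difference code $\mathcal{C}\in\mathsf{CAC}(L,3)$ whose leave $\Lambda$ has size $2$ with $\Lambda\ne\{L/3,2L/3\}$ if one of the following holds: (a) $p_1>3$, and every $p_i$ satisfies condition (★) except exactly one index $t$, for which $c_{p_t}=(p_t-1)/2$ and $r_t=1$; (b) $p_1=3$, $r_1=1$, and every $p_i$ with $i\ge2$ satisfies condition (★) except exactly one index $t\ge2$, for which $c_{p_t}=e_{p_t}=(p_t-1)/2$ and $r_t=1$; (c) $p_1=3$, $r_1=2$, and every $p_i$ with $i\ge2$ satisfies condition (★). Here a prime $p$ satisfies condition (★) if $p\equiv5\pmod 8$, or $p\equiv1\pmod8$ and $4\mid e_p$.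
   Context: $\mathcal{P}(L,\omega)$ is the set of $\omega$-element subsets of $\mathbb{Z}_L$. For $\mathcal{I}\in\mathcal{P}(L,\omega)$: $d(\mathcal{I})=\{a-b \bmod L: a,b\in\mathcal{I}\}$, $d^*(\mathcal{I})=d(\mathcal{I})\setminus\{0\}$. A conflict-avoiding code (CAC) of length $L$ and weight $\omega$ is a set $\mathcal{C}\subseteq\mathcal{P}(L,\omega)$ with $d^*(\mathcal{I})\cap d^*(\mathcal{J})=\emptyset$ for all distinct $\mathcal{I},\mathcal{J}\in\mathcal{C}$; $\mathsf{CAC}(L,\omega)$ is the class of these codes. A code is equi-difference if each codeword has the form $\{0,g,2g,\dots,(\omega-1)g\}$ (mod $L$). The leave of $\mathcal{C}$ is $\Lambda=\mathbb{Z}_L\setminus\bigcup_{\mathcal{I}\in\mathcal{C}}d(\mathcal{I})$. For odd $n>2$, $e_n$ is the multiplicative order of $2$ modulo $n$ (least $e\ge1$ with $2^e\equiv1\pmod n$) and $c_n$ is the least $c\ge1$ with $2^c\equiv\pm1\pmod n$ (the multiplicative suborder). *)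

(* Defs.v *)
From mathcomp Require Import all_boot.
Set Implicit Arguments. Unset Strict Implicit. Unset Printing Implicit Defensive.

(* Z_L is represented by 'I_L (residues 0..L-1); arithmetic is nat arithmetic mod L. *)

Definition in_diff (L : nat) (I : {set 'I_L}) (x : nat) : bool :=
  [exists a in I, [exists b in I, ((a + (L - b)) %% L == x)]].

Definition in_P (L w : nat) (I : {set 'I_L}) : bool := #|I| == w.

Definition is_CAC (L w : nat) (C : {set {set 'I_L}}) : Prop :=
  (forall I, I \in C -> in_P w I) /\
  (forall I J, I \in C -> J \in C -> I != J ->
     forall x, x < L -> 0 < x -> ~~ (in_diff I x && in_diff J x)).

Definition equi_difference (L w : nat) (C : {set {set 'I_L}}) : Prop :=
  forall I, I \in C -> exists g : nat,
    I = [set i : 'I_L | [exists k : 'I_w, val i == (k * g) %% L]].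

Definition leave (L : nat) (C : {set {set 'I_L}}) : {set 'I_L} :=
  [set x : 'I_L | [forall I in C, ~~ in_diff I x]].

(* e_n: multiplicative order of 2 mod n (least e >= 1 with 2^e = 1 mod n);
   the search over 1..n is exhaustive for odd n > 2 since e_n <= n - 1. *)
Definition ord2 (n : nat) : nat :=
  (find (fun e => 2 ^ e %% n == 1 %% n) (iota 1 n)).+1.

(* c_n: least c >= 1 with 2^c = +-1 mod n (again the search over 1..n suffices). *)
Definition subord2 (n : nat) : nat :=
  (find (fun c => (2 ^ c %% n == 1 %% n) || (2 ^ c %% n == n - 1)) (iota 1 n)).+1.

Definition star (p : nat) : bool :=
  (p %% 8 == 5) || ((p %% 8 == 1) && (4 %| ord2 p)).

(* Main.v *)
Require Import Defs.
From mathcomp Require Import all_boot.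
From mathcomp Require Import all_order all_algebra.
From mathcomp Require Import zify ring.
From mathcomp Require cyclic.
Set Implicit Arguments. Unset Strict Implicit. Unset Printing Implicit Defensive.
Import GRing.Theory.

Section Conv.
Local Open Scope ring_scope.

Lemma ZpnatE p (a b : nat) : (1 < p)%N ->
  ((a%:R : 'Z_p) == b%:R) = (a == b %[mod p])%N.
Proof. by move=> p1; rewrite -val_eqE /= !val_Zp_nat. Qed.

Lemma Zpnat0 p (a : nat) : (1 < p)%N -> ((a%:R : 'Z_p) == 0) = (p %| a)%N.
Proof. by move=> p1; rewrite -[0]/(0%:R) ZpnatE // mod0n. Qed.

Lemma Zp_sub1 p k : (1 < p)%N -> ((2%:R : 'Z_p) ^+ k == 1) = (p %| 2 ^ k - 1)%N.
Proof.
move=> p1; rewrite -natrX -[X in _ == X]/(1%:R) ZpnatE // eqn_mod_dvd //.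
by rewrite expn_gt0.
Qed.

Lemma Zp_add1 p k : (1 < p)%N -> ((2%:R : 'Z_p) ^+ k == -1) = (p %| 2 ^ k + 1)%N.
Proof.
move=> p1; rewrite -Zpnat0 // natrD natrX -subr_eq0 opprK.
by [].
Qed.

End Conv.

Section Gauss.
Local Open Scope ring_scope.

Lemma gauss2_aux p h : prime p -> p = (2 * h).+1 ->
  (2%:R : 'Z_p) ^+ h = (-1) ^+ (h - h %/ 2).
Proof.
move=> pp ph; have p1 : (1 < p)%N by apply: prime_gt1.
pose g j := if (j <= h %/ 2)%N then (2 * j)%N else (p - 2 * j)%N.
pose P := \prod_(1 <= j < h.+1) (j%:R : 'Z_p).
have PU : P \is a GRing.unit.
  apply: unitr_prod_in => j; rewrite mem_index_iota => /andP[j1 j2] _.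
  rewrite unitZpE // prime_coprime //; apply/negP => /(dvdn_leq j1); lia.
have Hperm : perm_eq [seq g j | j <- index_iota 1 h.+1] (index_iota 1 h.+1).
  have U : uniq [seq g j | j <- index_iota 1 h.+1].
    rewrite map_inj_in_uniq ?iota_uniq // => a b.
    rewrite !mem_index_iota /g => /andP[a1 a2] /andP[b1 b2].
    case: ifP => ha; case: ifP => hb; lia.
  apply: uniq_perm => //; first exact: iota_uniq.
  have S1 : {subset [seq g j | j <- index_iota 1 h.+1] <= index_iota 1 h.+1}.
    move=> y /mapP[j]; rewrite !mem_index_iota /g => /andP[j1 j2] ->.
    case: ifP => hj; lia.
  have S2 : (size (index_iota 1 h.+1) <= size [seq g j | j <- index_iota 1 h.+1])%N.
    by rewrite size_map.
  by have [] := uniq_min_size U S1 S2.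
have E1 : \prod_(1 <= j < h.+1) ((2 * j)%N%:R : 'Z_p) = 2%:R ^+ h * P.
  rewrite (eq_bigr (fun j => 2%:R * j%:R)) => [|j _]; last by rewrite natrM.
  by rewrite big_split /= prodr_const_nat subn1.
have E2 : \prod_(1 <= j < h.+1) ((2 * j)%N%:R : 'Z_p) = (-1) ^+ (h - h %/ 2) * P.
  rewrite (big_cat_nat (n := (h %/ 2).+1)) /=; [|lia|lia].
  have -> : \prod_((h %/ 2).+1 <= i < h.+1) ((2 * i)%N%:R : 'Z_p)
      = \prod_((h %/ 2).+1 <= i < h.+1) (-1 * (g i)%:R).
    apply: eq_big_nat => i /andP[i1 i2]; rewrite /g ifF; last by lia.
    rewrite natrB; last by lia.
    by rewrite pchar_Zp // sub0r mulN1r opprK.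
  rewrite big_split /= prodr_const_nat.
  have -> : (h.+1 - (h %/ 2).+1)%N = (h - h %/ 2)%N by lia.
  rewrite mulrCA; congr (_ * _).
  idtac.
  have -> : \prod_(1 <= i < (h %/ 2).+1) ((2 * i)%N%:R : 'Z_p)
      = \prod_(1 <= i < (h %/ 2).+1) (g i)%:R.
    by apply: eq_big_nat => i /andP[i1 i2]; rewrite /g ifT //; lia.
  rewrite -big_cat_nat /=; [|lia|lia].
  by rewrite /P -[RHS](perm_big _ Hperm) big_map.
apply: (mulIr PU); by rewrite -E1 E2.
Qed.

End Gauss.

Section NT.
Local Open Scope ring_scope.

Lemma Zp_one_neq_m1 p : prime p -> odd p -> (1 : 'Z_p) != -1.
Proof.
move=> pp po; have p1 : (1 < p)%N by apply: prime_gt1.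
rewrite -subr_eq0 opprK -[1 + 1]/(2%:R) Zpnat0 //.
by rewrite dvdn_prime2 // ?pdiv_prime //; apply/eqP=> p2; rewrite p2 in po.
Qed.

Lemma Zp2_unit p : (1 < p)%N -> odd p -> (2%:R : 'Z_p) \is a GRing.unit.
Proof. by move=> p1 po; rewrite unitZpE // coprime_sym coprime2n. Qed.

Lemma ord_dvd p e x : (1 < p)%N -> (0 < e)%N -> (2%:R : 'Z_p) ^+ e = 1 ->
  (forall j, (0 < j < e)%N -> (2%:R : 'Z_p) ^+ j != 1) ->
  (2%:R : 'Z_p) ^+ x = 1 -> (e %| x)%N.
Proof.
move=> p1 e0 He Hj; rewrite (divn_eq x e) exprD mulnC exprM He expr1n mul1r => Hs.
case: (posnP (x %% e)) => s0; first by rewrite s0 addn0 dvdn_mulr.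
by move: (Hj _ (introT andP (conj s0 (ltn_pmod x e0)))); rewrite Hs eqxx.
Qed.

Lemma find_iota_facts (P : pred nat) n c : (find P (iota 1 n)).+1 = c -> (c <= n)%N ->
  P c /\ forall j, (0 < j < c)%N -> ~~ P j.
Proof.
move=> Hc cn.
have hs : has P (iota 1 n) by rewrite has_find size_iota -Hc in cn *.
have := nth_find 0%N hs; have := @before_find _ 0%N P (iota 1 n).
set f := find P (iota 1 n) in Hc *; move=> bf nf; split.
  move: nf; rewrite nth_iota; last by lia.
  by have -> : (1 + f)%N = c by lia.
move=> j /andP[j0 jc].
have := bf j.-1 ltac:(lia); rewrite nth_iota; last by lia.
have -> : (1 + j.-1)%N = j by lia.
by move=> ->; lia.
Qed.

Lemma find_iota_le (P : pred nat) n j : (0 < j <= n)%N -> P j -> (find P (iota 1 n) < j)%N.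
Proof.
move=> /andP[j0 jn] Pj; have := @before_find _ 0%N P (iota 1 n).
set f := find P (iota 1 n); move=> bf; rewrite ltnNge; apply/negP => H.
have := bf j.-1 ltac:(lia); rewrite nth_iota; last by lia.
have -> : (1 + j.-1)%N = j by lia.
by rewrite Pj.
Qed.

Lemma modeq1E p j : (1 < p)%N -> (2 ^ j %% p == 1 %% p)%N = ((2%:R : 'Z_p) ^+ j == 1).
Proof. by move=> p1; rewrite -natrX -[X in _ = (_ == X)]/(1%:R) ZpnatE. Qed.

Lemma modeqm1E p j : (1 < p)%N -> (2 ^ j %% p == p - 1)%N = ((2%:R : 'Z_p) ^+ j == -1).
Proof.
move=> p1; have -> : (-1 : 'Z_p) = (p - 1)%N%:R.
  by rewrite natrB ?pchar_Zp ?sub0r //; lia.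
rewrite -natrX ZpnatE // [((p - 1) %% p)%N]modn_small //; lia.
Qed.

Lemma ord2_facts p : prime p -> (ord2 p <= p)%N ->
  (2%:R : 'Z_p) ^+ ord2 p = 1 /\
  forall j, (0 < j < ord2 p)%N -> (2%:R : 'Z_p) ^+ j != 1.
Proof.
move=> pp le; have p1 : (1 < p)%N by apply: prime_gt1.
have [H1 H2] := find_iota_facts (erefl (ord2 p)) le.
split; first by apply/eqP; rewrite -modeq1E.
by move=> j /H2; rewrite modeq1E.
Qed.

Lemma subord2_facts p : prime p -> (subord2 p <= p)%N ->
  ((2%:R : 'Z_p) ^+ subord2 p == 1) || ((2%:R : 'Z_p) ^+ subord2 p == -1) /\
  forall j, (0 < j < subord2 p)%N ->
    ((2%:R : 'Z_p) ^+ j != 1) && ((2%:R : 'Z_p) ^+ j != -1).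
Proof.
move=> pp le; have p1 : (1 < p)%N by apply: prime_gt1.
have [H1 H2] := find_iota_facts (erefl (subord2 p)) le.
split; first by move: H1; rewrite modeq1E // modeqm1E.
by move=> j /H2; rewrite modeq1E // modeqm1E // negb_or.
Qed.

Lemma gauss1 p : prime p -> (p %% 8 = 1)%N -> (2%:R : 'Z_p) ^+ (p %/ 2) = 1.
Proof.
move=> pp p8; rewrite (@gauss2_aux p (p %/ 2)) //; last by lia.
have -> : (p %/ 2 - p %/ 2 %/ 2)%N = (2 * (p %/ 8))%N by lia.
by rewrite exprM sqrrN expr1n expr1n.
Qed.

Lemma gauss5 p : prime p -> (p %% 8 = 5)%N -> (2%:R : 'Z_p) ^+ (p %/ 2) = -1.
Proof.
move=> pp p8; rewrite (@gauss2_aux p (p %/ 2)) //; last by lia.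
have -> : (p %/ 2 - p %/ 2 %/ 2)%N = (2 * (p %/ 8)).+1 by lia.
by rewrite exprS exprM sqrrN !expr1n mulr1.
Qed.

Lemma star_no p k : prime p -> star p -> odd k ->
  ((2%:R : 'Z_p) ^+ k != 1) && ((2%:R : 'Z_p) ^+ k != -1).
Proof.
move=> pp st ok; have p1 : (1 < p)%N by apply: prime_gt1.
have po : odd p by move: st; rewrite /star; case/orP; [|case/andP]; move/eqP => h; lia.
suff H : (2%:R : 'Z_p) ^+ (2 * k) != 1.
  rewrite mulnC exprM in H; apply/andP; split; apply/eqP => E;
    by rewrite E ?sqrrN expr1n eqxx in H.
case/orP: st => [/eqP p8 | /andP[/eqP p8 d4]].
  apply/eqP => H; have := Zp_one_neq_m1 pp po; apply/negP; rewrite negbK; apply/eqP.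
  have -> : (-1 : 'Z_p) = (2%:R ^+ (p %/ 2)) ^+ k by rewrite gauss5 // -signr_odd ok.
  rewrite -exprM.
  have E : (p %/ 2 = 2 * (p %/ 2 %/ 2))%N by lia.
  have -> : (p %/ 2 * k = 2 * k * ((p %/ 2) %/ 2))%N by rewrite {1}E mulnAC.
  by rewrite exprM H expr1n.
have le : (ord2 p <= p)%N.
  rewrite leqNgt; apply/negP => H.
  have : (ord2 p <= p.+1)%N.
    by rewrite /ord2 ltnS; apply: leq_trans (find_size _ _) _; rewrite size_iota.
  move=> H2; have E : ord2 p = p.+1 by lia.
  by move: d4; rewrite E; lia.
have [He Hj] := ord2_facts pp le.
apply/eqP => /(ord_dvd p1 _ He Hj) => H.
have : (0 < ord2 p)%N by [].
move=> o0; move: (H o0) => H'.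
move: (dvdn_trans d4 H'); lia.
Qed.

End NT.

Section NT2.
Local Open Scope ring_scope.

Lemma nonstar_odd p : prime p -> odd p -> ~~ star p ->
  subord2 p = ((p - 1) %/ 2)%N -> odd ((p - 1) %/ 2).
Proof.
move=> pp po ns sc; have p1 : (1 < p)%N by apply: prime_gt1.
have : (p %% 8 = 1 \/ p %% 8 = 3 \/ p %% 8 = 5 \/ p %% 8 = 7)%N by lia.
case=> [p8|[p8|[p8|p8]]]; [|lia| |lia]; last first.
  by move: ns; rewrite /star p8.
exfalso; move: ns; rewrite /star p8 /=; apply/negP; rewrite negbK.
have le : (subord2 p <= p)%N by lia.
have [_ Hs] := subord2_facts pp le.
have G := gauss1 pp p8.
have hle : (ord2 p <= (p - 1) %/ 2)%N.
  rewrite /ord2; apply: (@find_iota_le _ p ((p - 1) %/ 2)); first by lia.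
  by rewrite modeq1E // -(_ : (p %/ 2 = (p - 1) %/ 2)%N) ?G //; lia.
have le2 : (ord2 p <= p)%N by lia.
have [He _] := ord2_facts pp le2.
have E : ord2 p = ((p - 1) %/ 2)%N.
  apply/eqP; rewrite eqn_leq hle /= leqNgt; apply/negP => lt.
  have o0 : (0 < ord2 p)%N by [].
  by move: (Hs _ (introT andP (conj o0 (leq_trans lt (eq_leq (esym sc)))))); rewrite He eqxx.
rewrite E; lia.
Qed.

Lemma caseb_nom1 p k : prime p -> odd p -> ord2 p = ((p - 1) %/ 2)%N ->
  subord2 p = ((p - 1) %/ 2)%N -> (2%:R : 'Z_p) ^+ k != -1.
Proof.
move=> pp po oe sc; have p1 : (1 < p)%N by apply: prime_gt1.
have le : (ord2 p <= p)%N by lia.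
have [He _] := ord2_facts pp le.
have sle : (subord2 p <= p)%N by lia.
have [_ Hs] := subord2_facts pp sle.
have e0 : (0 < ord2 p)%N by [].
rewrite (divn_eq k (ord2 p)) exprD mulnC exprM He expr1n mul1r.
case: (posnP (k %% ord2 p)) => s0.
  by rewrite s0 expr0 Zp_one_neq_m1.
have := Hs (k %% ord2 p)%N; rewrite s0 sc -oe ltn_pmod //.
by move=> /(_ isT) /andP[_ ->].
Qed.

Lemma pow2_inj p i j : prime p -> odd p -> subord2 p = ((p - 1) %/ 2)%N ->
  (i < (p - 1) %/ 2)%N -> (j < (p - 1) %/ 2)%N ->
  ((2%:R : 'Z_p) ^+ i = 2%:R ^+ j -> i = j) /\ (2%:R : 'Z_p) ^+ i != - 2%:R ^+ j.
Proof.
move=> pp po sc.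
have p1 : (1 < p)%N by apply: prime_gt1.
have sle : (subord2 p <= p)%N by lia.
have [_ Hs] := subord2_facts pp sle.
have U : forall k, (2%:R : 'Z_p) ^+ k \is a GRing.unit.
  by move=> k; rewrite unitrX // Zp2_unit.
have key : forall a b, (a <= b)%N -> (b < (p - 1) %/ 2)%N ->
    ((2%:R : 'Z_p) ^+ a = 2%:R ^+ b -> a = b) /\ (2%:R : 'Z_p) ^+ a != - 2%:R ^+ b.
  move=> a b ab bc; rewrite -(subnKC ab) exprD.
  have P1 : forall y : 'Z_p, 2%:R ^+ a = 2%:R ^+ a * y -> y = 1.
    by move=> y /esym; rewrite -{2}(mulr1 (2%:R ^+ a)) => /(mulrI (U a)).
  split.
    move/P1; case: (posnP (b - a)) => d0; first by lia.
    by move=> E; have := Hs (b - a)%N ltac:(lia); rewrite E eqxx.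
  apply/eqP; rewrite -mulrN => /P1 E.
  case: (posnP (b - a)) => d0.
    by move: E; rewrite d0 expr0 => /eqP; rewrite eq_sym (negbTE (Zp_one_neq_m1 pp po)).
  have := Hs (b - a)%N ltac:(lia).
  by rewrite -(opprK (_ ^+ _)) E eqxx andbF.
move=> ic jc; case: (leqP i j) => ij; first by apply: key.
have [k1 k2] := key j i (ltnW ij) ic; split.
  by move=> E; apply/esym/k1/esym.
by apply: contra k2 => /eqP ->; rewrite opprK.
Qed.




Lemma pigeon p u : prime p -> odd p -> subord2 p = ((p - 1) %/ 2)%N ->
  (0 < u < p)%N -> exists k, (k < (p - 1) %/ 2)%N /\
   ((u%:R : 'Z_p) = 2%:R ^+ k \/ (u%:R : 'Z_p) = - 2%:R ^+ k).
Proof.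
move=> pp po sc up; have p1 : (1 < p)%N by apply: prime_gt1.
set c := ((p - 1) %/ 2)%N.
pose A := [seq (2%:R : 'Z_p) ^+ k | k <- iota 0 c] ++ [seq - (2%:R : 'Z_p) ^+ k | k <- iota 0 c].
pose B := [seq (i%:R : 'Z_p) | i <- iota 1 (p - 1)].
have UA : uniq A.
  rewrite cat_uniq; apply/and3P; split.
  - rewrite map_inj_in_uniq ?iota_uniq // => i j; rewrite !mem_iota => /andP[_ ic] /andP[_ jc].
    by have [] := pow2_inj pp po sc ic jc.
  - apply/hasPn => x /mapP[j]; rewrite mem_iota => /andP[_ jc] ->.
    apply/mapP => [[i]]; rewrite mem_iota => /andP[_ ic] /esym/eqP.
    by have [_ /negPf->] := pow2_inj pp po sc ic jc.
  - rewrite map_inj_in_uniq ?iota_uniq // => i j; rewrite !mem_iota => /andP[_ ic] /andP[_ jc].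
    by move/oppr_inj; have [] := pow2_inj pp po sc ic jc.
have SAB : {subset A <= B}.
  move=> x xA; have xU : x \is a GRing.unit.
    move: xA; rewrite mem_cat => /orP[] /mapP[k _ ->]; rewrite ?unitrN unitrX // Zp2_unit //.
  have x0 : x != 0 by apply: contraTneq xU => ->; rewrite unitr0.
  apply/mapP; exists (val x); last by rewrite natr_Zp.
  rewrite mem_iota; have ZC := Zp_cast p1.
  have xl : (val x < p)%N := leq_trans (ltn_ord x) (eq_leq ZC).
  have : val x != 0%N.
    by apply: contraNneq x0 => h; rewrite -val_eqE /= h.
  lia.
have SZ : (size B <= size A)%N by rewrite size_cat !size_map !size_iota; lia.
have [_ EAB] := uniq_min_size UA SAB SZ.
have : (u%:R : 'Z_p) \in A.
  by rewrite EAB; apply/mapP; exists u => //; rewrite mem_iota; lia.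
rewrite mem_cat => /orP[] /mapP[k]; rewrite mem_iota => /andP[_ kc] ->; exists k; by auto.
Qed.

End NT2.

Section Core.
Local Open Scope ring_scope.
Variable N' : nat.
Local Notation N := N'.+2.
Local Notation R := 'I_N.

Definition Dset (g : R) : {set R} := [set g; -g; g *+ 2; - (g *+ 2)].
Definition code (g : R) : {set R} :=
  [set i : R | [exists k : 'I_3, val i == (k * val g) %% N]]%N.

Lemma code_eq g : code g = [set 0; g; g *+ 2].
Proof.
apply/setP => i; rewrite !inE -!orbA.
have E : forall k : nat, (val i == k * val g %% N)%N = (i == g *+ k).
  by move=> k; rewrite -val_eqE /= Zp_mulrn /= mulnC.
apply/existsP/idP => [[k]|H].
  by rewrite E; case: k => [[|[|[|]]]] //= _ /eqP ->; rewrite ?eqxx ?orbT.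
have [k Hk] : exists k : 'I_3, i == g *+ k.
  case/or3P: H => /eqP ->.
  - by exists (@Ordinal 3 0 isT); rewrite mulr0n.
  - by exists (@Ordinal 3 1 isT); rewrite mulr1n.
  - by exists (@Ordinal 3 2 isT).
by exists k; rewrite E.
Qed.

Lemma in_diffE (I : {set R}) (x : R) :
  in_diff I x = [exists a in I, exists b in I, a - b == x].
Proof.
rewrite /in_diff; apply: eq_existsb => a; congr (_ && _).
apply: eq_existsb => b; congr (_ && _).
by rewrite -val_eqE /= modnDmr.
Qed.

Lemma in_diff_code g (x : R) : in_diff (code g) x = (x == 0) || (x \in Dset g).
Proof.
rewrite in_diffE code_eq /Dset.
have E1 : g *+ 2 - g = g by rewrite mulr2n addrK.
have E2 : g - g *+ 2 = - g by rewrite mulr2n opprD addrA subrr sub0r.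
apply/idP/idP.
  case/exists_inP => a aI /exists_inP[b bI /eqP <-].
  move: aI bI; rewrite !inE -!orbA => /or3P[] /eqP -> /or3P[] /eqP ->;
  by rewrite ?subrr ?subr0 ?sub0r ?E1 ?E2 !eqxx ?orbT.
rewrite !inE -!orbA => /orP[/eqP ->|/or4P[] /eqP ->].
- by apply/exists_inP; exists 0; rewrite ?inE ?eqxx //; apply/exists_inP; exists 0;
    rewrite ?inE ?eqxx ?subrr.
- by apply/exists_inP; exists g; rewrite ?inE ?eqxx ?orbT //; apply/exists_inP; exists 0;
    rewrite ?inE ?eqxx ?subr0.
- by apply/exists_inP; exists 0; rewrite ?inE ?eqxx ?orbT //; apply/exists_inP; exists g;
    rewrite ?inE ?eqxx ?sub0r ?orbT.
- by apply/exists_inP; exists (g *+ 2); rewrite ?inE ?eqxx ?orbT //; apply/exists_inP; exists 0;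
    rewrite ?inE ?eqxx ?subr0 ?orbT.
- by apply/exists_inP; exists 0; rewrite ?inE ?eqxx ?orbT //; apply/exists_inP; exists (g *+ 2);
    rewrite ?inE ?eqxx ?sub0r ?orbT.
Qed.

Lemma unit2 : odd N -> (2%:R : R) \is a GRing.unit.
Proof.
move=> oN; have := @unitZpE N 2 isT.
by rewrite coprime_sym coprime2n oN.
Qed.

Lemma dbl_inj (g h : R) : odd N -> g *+ 2 = h *+ 2 -> g = h.
Proof.
by move=> oN; rewrite -[g *+ 2]mulr_natl -[h *+ 2]mulr_natl; apply: mulrI; apply: unit2.
Qed.

Lemma dbl_eq0 (g : R) : odd N -> (g *+ 2 == 0) = (g == 0).
Proof.
move=> oN; apply/eqP/eqP => [|->]; last by rewrite mul0rn.
by move=> H; apply: (dbl_inj oN); rewrite H mul0rn.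
Qed.

Lemma card_code g : odd N -> g != 0 -> #|code g| = 3%N.
Proof.
move=> oN g0; rewrite code_eq -setUA cardsU1 cards2 !inE negb_or.
have g2 : g != g *+ 2.
  apply: contra g0 => /eqP E.
  have : g *+ 2 - g = g by rewrite mulr2n addrK.
  by rewrite -E subrr => <-.
rewrite eq_sym g0 eq_sym dbl_eq0 // g0 g2; by [].
Qed.

Lemma DsetN g x : (- x \in Dset g) = (x \in Dset g).
Proof.
rewrite /Dset !inE !eqr_oppLR !opprK.
by case: (x == g); case: (x == -g); case: (x == g *+ 2); case: (x == -(g *+ 2)).
Qed.

Lemma core (v : R) (G : {set R}) : odd N -> v != 0 -> G != set0 ->
  (forall g, g \in G -> g != 0) ->
  (forall g h, g \in G -> h \in G -> g != h -> forall x, x \in Dset g -> x \in Dset h -> False) ->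
  (forall x, x != 0 -> x != v -> x != -v -> exists2 g, g \in G & x \in Dset g) ->
  (forall g, g \in G -> v \notin Dset g) ->
  exists C : {set {set R}}, [/\ is_CAC 3 C, equi_difference 3 C & leave C = [set v; -v]].
Proof.
move=> oN v0 G0 Gn0 Gdis Gcov Gv.
exists [set code g | g in G]; split.
- split.
    by move=> I /imsetP[g gG ->]; rewrite /in_P card_code // Gn0.
  move=> I J /imsetP[g gG ->] /imsetP[h hG ->] IJ x xN x0.
  have gh : g != h by apply: contraNneq IJ => ->.
  pose X := Ordinal xN.
  have -> : x = val X by [].
  rewrite !in_diff_code; apply/negP => /andP[/orP[X0|Xg] /orP[X0'|Xh]].
  - by move: X0 x0 => /eqP/(f_equal val) /= ->.
  - by move: X0 x0 => /eqP/(f_equal val) /= ->.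
  - by move: X0' x0 => /eqP/(f_equal val) /= ->.
  - exact: (Gdis g h gG hG gh X Xg Xh).
- by move=> I /imsetP[g _ ->]; exists (val g).
apply/setP => x; rewrite /leave !inE.
apply/forall_inP/idP.
  move=> H; apply/negPn/negP; rewrite negb_or => /andP[xv xnv].
  case: (x =P 0) => [x0 | /eqP xn0].
    case/set0Pn: G0 => g gG.
    by have := H (code g) (imset_f _ gG); rewrite in_diff_code x0 eqxx.
  have [g gG xg] := Gcov x xn0 xv xnv.
  by have := H _ (imset_f _ gG); rewrite in_diff_code xg orbT.
move=> xvv I /imsetP[g gG ->]; rewrite in_diff_code negb_or.
case/orP: xvv => /eqP ->.
  by rewrite v0 Gv.
by rewrite oppr_eq0 v0 DsetN Gv.
Qed.

End Core.

Section Color.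
Local Open Scope ring_scope.
Variable N' : nat.
Local Notation N := N'.+2.
Local Notation R := 'I_N.
Hypothesis oN : odd N.

Let two := (2%:R : R).
Let U2 : two \is a GRing.unit := unit2 oN.

Lemma two_cancel (x y : R) : two * x = two * y -> x = y.
Proof. exact: (mulrI U2). Qed.

Let T := totient N.
Let T0 : (0 < T)%N. Proof. by rewrite totient_gt0. Qed.

Lemma twoT : two ^+ T = 1.
Proof.
have H := @cyclic.Euler_exp_totient 2 N; rewrite coprime2n oN in H.
have := H isT; rewrite -/T => /eqP; rewrite -(@ZpnatE N) // natrX => /eqP ->.
by [].
Qed.

Lemma twoX_mod k : two ^+ k = two ^+ (k %% T).
Proof. by rewrite {1}(divn_eq k T) exprD mulnC exprM twoT expr1n mul1r. Qed.

Definition Pr (r y : R) k := (y == two ^+ k * r) || (y == - (two ^+ k * r)).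

Definition rel (x y : R) := [exists k : 'I_T, Pr x y k].

Lemma relP x y : reflect (exists k, Pr x y k) (rel x y).
Proof.
apply: (iffP existsP) => [[k H]|[k H]]; first by exists k.
exists (Ordinal (ltn_pmod k T0)); by rewrite /Pr /= -twoX_mod.
Qed.

Lemma Pr_mul r y k j : Pr r y k -> Pr y (two ^+ j * y) j /\ Pr r (two ^+ j * y) (j + k).
Proof.
move=> H; split; first by rewrite /Pr eqxx.
by case/orP: H => /eqP ->; rewrite /Pr exprD -mulrA ?mulrN eqxx ?orbT.
Qed.

Lemma Pr_neg r y k : Pr r y k -> Pr r (- y) k.
Proof. by rewrite /Pr eqr_opp eqr_oppLR orbC. Qed.

Lemma rel_refl x : rel x x.
Proof. by apply/relP; exists 0%N; rewrite /Pr expr0 mul1r eqxx. Qed.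

Lemma rel_trans x y z : rel x y -> rel y z -> rel x z.
Proof.
move=> /relP[a Ha] /relP[b Hb]; apply/relP; exists (b + a)%N.
move: Hb; rewrite /Pr; case/orP: Ha => /eqP ->; case/orP => /eqP ->;
  by rewrite ?mulrN ?opprK exprD mulrA ?eqxx ?orbT.
Qed.

Lemma rel_sym x y : rel x y -> rel y x.
Proof.
move=> /existsP[k Hk]; apply/relP; exists (T - k)%N.
have E : two ^+ (T - k) * two ^+ k = 1 by rewrite -exprD subnK ?twoT // ltnW.
move: Hk; rewrite /Pr; case/orP => /eqP ->; rewrite ?mulrN mulrA E mul1r;
  by rewrite ?opprK eqxx ?orbT.
Qed.

Definition rep (x : R) : R := [arg min_(y < x | rel x y) val y].

Lemma rep_rel x : rel x (rep x).
Proof. by rewrite /rep; case: arg_minnP => //; exact: rel_refl. Qed.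

Lemma rep_eq x y : rel x y -> rep x = rep y.
Proof.
move=> xy; apply: val_inj; apply/eqP; rewrite eqn_leq.
rewrite /rep; case: arg_minnP; first exact: rel_refl.
move=> a xa amin; case: arg_minnP; first exact: rel_refl.
move=> b yb bmin; rewrite amin ?bmin //.
  exact: rel_trans (rel_sym xy) xa.
exact: rel_trans xy yb.
Qed.

Definition kk (x : R) := find (Pr (rep x) x) (iota 0 T).

Lemma kk_spec x : (kk x < T)%N /\ Pr (rep x) x (kk x) /\
  forall j, (j < kk x)%N -> ~~ Pr (rep x) x j.
Proof.
have [k Hk] : exists k : 'I_T, Pr (rep x) x k by apply/existsP; apply: rel_sym (rep_rel x).
have hs : has (Pr (rep x) x) (iota 0 T).
  by apply/hasP; exists (val k) => //; rewrite mem_iota /= add0n ltn_ord.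
have lt : (kk x < T)%N by move: hs; rewrite has_find size_iota.
split => //; split.
  by have := nth_find 0%N hs; rewrite nth_iota // add0n.
move=> j jk; have := before_find 0%N jk; rewrite nth_iota ?add0n //; lia.
Qed.

Definition fcol (x : R) := odd (kk x).

Lemma Pr_negE r y k : Pr r (- y) k = Pr r y k.
Proof. by rewrite /Pr eqr_opp eqr_oppLR orbC. Qed.

Lemma fcol_prop (S : {set R}) :
  (forall x, x \in S -> - x \in S) -> (forall x, x \in S -> two * x \in S) ->
  (forall x, x \in S -> forall k, odd k -> (two ^+ k * x != x) && (two ^+ k * x != - x)) ->
  forall x, x \in S -> fcol (two * x) = ~~ fcol x /\ fcol (- x) = fcol x.
Proof.
move=> SN S2 SH x xS.
have Sk : forall k y, y \in S -> two ^+ k * y \in S.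
  elim=> [|k IH] y yS; first by rewrite expr0 mul1r.
  by rewrite exprS -mulrA; apply/S2/IH.
have Srel : forall y z, y \in S -> rel y z -> z \in S.
  move=> y z yS /existsP[k]; rewrite /Pr => /orP[] /eqP ->; rewrite ?Sk ?SN ?Sk //.
split; last first.
  have E : rep (- x) = rep x.
    apply/esym/rep_eq/relP; exists 0%N; by rewrite /Pr expr0 mul1r eqxx orbT.
  rewrite /fcol /kk E; congr odd; apply: eq_find => k; exact: Pr_negE.
set r := rep x.
have r2 : rep (two * x) = r.
  apply/esym/rep_eq/relP; exists 1%N; by rewrite /Pr expr1 eqxx.
have rS : r \in S := Srel x r xS (rep_rel x).
have [alt [Pa amin]] := kk_spec x.
have [blt [Pb bmin]] := kk_spec (two * x).
rewrite r2 in Pb bmin; rewrite /fcol.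
move: alt Pa amin blt Pb bmin; rewrite -/r.
set a := kk x; set b := kk (two * x) => alt Pa amin blt Pb bmin.
have C1 : Pr r (two * x) a.+1.
  have [_ H] := Pr_mul 1 Pa; by rewrite expr1 add1n in H.
have C2 : (0 < b)%N -> Pr r x b.-1.
  move=> b0; move: Pb; rewrite -(prednK b0) /Pr exprS -mulrA -mulrN.
  by case/orP => /eqP /two_cancel ->; rewrite eqxx ?orbT.
case: (posnP b) => b0.
  rewrite b0 /=; case oa : (odd a) => //; exfalso.
  have : odd a.+1 by rewrite /= oa.
  move/(SH r rS)/andP => [H1 H2].
  move: Pb C1; rewrite b0 /Pr expr0 mul1r.
  case/orP => /eqP ->; case/orP => /eqP H.
  - by move: H1; rewrite -H eqxx.
  - have E : two ^+ a.+1 * r = - r by rewrite {2}H opprK.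
    by move: H2; rewrite E eqxx.
  - by move: H2; rewrite -H eqxx.
  - by move: H1; rewrite -(oppr_inj H) eqxx.
have ab : (a <= b.-1)%N.
  rewrite leqNgt; apply/negP => H; by move: (amin _ H); rewrite C2.
case: (ltnP a.+1 T) => aT.
  have ba : (b <= a.+1)%N.
    rewrite leqNgt; apply/negP => H; by move: (bmin _ H); rewrite C1.
  have -> : b = a.+1 by lia.
  by [].

have aT' : a.+1 = T by lia.
move: C1; rewrite aT' /Pr twoT => C1.
have : Pr r (two * x) 0 by rewrite /Pr expr0.
by move/negP: (bmin _ b0).
Qed.

End Color.

Section Build.
Local Open Scope ring_scope.
Variable N' : nat.
Local Notation N := N'.+2.
Local Notation R := 'I_N.
Hypothesis oN : odd N.

Local Notation two := (2%:R : R).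
Let U2 : two \is a GRing.unit := unit2 oN.

Lemma unit_mul_eq0 (u y : R) : u \is a GRing.unit -> (u * y == 0) = (y == 0).
Proof.
move=> Uu; apply/eqP/eqP => [H|->]; last by rewrite mulr0.
by apply: (mulrI Uu); rewrite H mulr0.
Qed.

Lemma neq_opp (y : R) : y != 0 -> y != - y.
Proof.
move=> y0; apply: contra y0 => /eqP E; rewrite -(dbl_eq0 _ oN) mulr2n.
by rewrite {1}E addNr.
Qed.

Definition gd (x : R) := gcdn (val x) N.

Lemma gdN x : gd (- x) = gd x.
Proof.
rewrite /gd /= gcdn_modl.
have xl : (val x <= N)%N by apply: ltnW; apply: ltn_ord.
have E1 : gcdn (N - x) N = gcdn (N - x) x by rewrite -(gcdnDl (N - x) x) subnK.
have E2 : gcdn x N = gcdn x (N - x) by rewrite -(gcdnDl x (N - x)) subnKC.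
by rewrite E1 E2 gcdnC.
Qed.

Lemma gd2 x : gd (two * x) = gd x.
Proof.
rewrite /gd /= gcdn_modl [LHS]gcdnC Gauss_gcdr; first by rewrite gcdnC.
by rewrite coprime_modr coprime_sym coprime2n.
Qed.

Lemma gdX k x : gd (two ^+ k * x) = gd x.
Proof. by elim: k => [|k IH]; rewrite ?expr0 ?mul1r // exprS -mulrA gd2. Qed.

Definition pos (x : R) := (val x <= val (- x))%N.

Lemma pos_both x : pos x -> pos (- x) -> x = 0.
Proof.
rewrite /pos opprK => a b; apply/eqP; rewrite -(dbl_eq0 _ oN) mulr2n.
have : x = - x by apply: val_inj; apply/eqP; rewrite eqn_leq a b.
by move=> {1}->; rewrite addNr.
Qed.

Lemma pos_either x : pos x || pos (- x).
Proof. by rewrite /pos opprK leq_total. Qed.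

Definition posrep x := if pos x then x else - x.

Lemma posrep_pos x : pos (posrep x).
Proof. by rewrite /posrep; case: ifP => // /negbT; have := pos_either x; case: (pos x). Qed.

Lemma posrep_eq x : (posrep x = x) \/ (posrep x = - x).
Proof. by rewrite /posrep; case: ifP; [left|right]. Qed.

Lemma DsetE (g x : R) : (x \in Dset g) = [|| x == g, x == - g, x == two * g | x == - (two * g)].
Proof. by rewrite /Dset !inE -!orbA mulr_natl. Qed.

Lemma DsetNg (g x : R) : (x \in Dset (- g)) = (x \in Dset g).
Proof.
rewrite !DsetE opprK mulrN opprK.
by case: (x == g); case: (x == -g); case: (x == two * g); case: (x == -(two * g)).
Qed.

Lemma Dset_posrep (g x : R) : (x \in Dset (posrep g)) = (x \in Dset g).
Proof. by case: (posrep_eq g) => ->; rewrite ?DsetNg. Qed.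

Lemma Dset_sub (A : {set R}) (g x : R) : (forall y, y \in A -> - y \in A) ->
  (forall y, y \in A -> two * y \in A) -> g \in A -> x \in Dset g -> x \in A.
Proof.
move=> AN A2 gA; rewrite DsetE => /or4P[] /eqP ->; by rewrite ?AN ?A2.
Qed.

Lemma dbl_eqE (a b : R) : (two * a == two * b) = (a == b).
Proof. by apply/eqP/eqP => [/(two_cancel oN)|->]. Qed.

Lemma DsetO (v : R) i x : (x \in Dset (two ^+ i * v)) = Pr v x i || Pr v x i.+1.
Proof. by rewrite DsetE /Pr exprS -mulrA orbA. Qed.

Lemma buildG (v : R) (c : nat) : (1 < c)%N -> odd c -> v *+ 3 != 0 ->
  (forall x, gd x = gd v -> exists2 k, (k < c)%N & Pr v x k) ->
  (forall i j, (i < j < c)%N ->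
     (two ^+ i * v != two ^+ j * v) && (two ^+ i * v != - (two ^+ j * v))) ->
  (forall x, x *+ 3 != 0 -> gd x != gd v -> forall k, odd k ->
     (two ^+ k * x != x) && (two ^+ k * x != - x)) ->
  exists C : {set {set R}}, [/\ is_CAC 3 C, equi_difference 3 C & leave C = [set v; -v]].
Proof.
move=> c1 oc v3 O1 O2 SH.
have v0 : v != 0 by apply: contra v3 => /eqP ->; rewrite mul0rn.
have nz3 : forall k (y : R), ((two ^+ k * y) *+ 3 == 0) = (y *+ 3 == 0).
  by move=> k y; rewrite -mulrnAr unit_mul_eq0 // unitrX.
have nz2 : forall y : R, ((two * y) *+ 3 == 0) = (y *+ 3 == 0).
  by move=> y; rewrite -mulrnAr unit_mul_eq0.
have nzN3 : forall y : R, ((- y) *+ 3 == 0) = (y *+ 3 == 0).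
  by move=> y; rewrite mulNrn oppr_eq0.
have Odist : forall a b, (a < c)%N -> (b < c)%N ->
    ((two ^+ a * v == two ^+ b * v) = (a == b)) /\ (two ^+ a * v != - (two ^+ b * v)).
  move=> a b ac bc; case: (ltngtP a b) => [ab|ba|->].
  - have /andP[h1 h2] := O2 a b (introT andP (conj ab bc)).
    by rewrite (negbTE h1).
  - have /andP[h1 h2] := O2 b a (introT andP (conj ba ac)).
    rewrite eq_sym (negbTE h1); split => //.
    by apply: contra h2 => /eqP ->; rewrite opprK.
  - rewrite ?eqxx; split => //; apply: neq_opp.
    by rewrite unit_mul_eq0 // unitrX.
have PrO : forall a b x, (a < c)%N -> (b < c)%N -> Pr v x a -> Pr v x b -> a = b.
  move=> a b x ac bc; have [D1 D2] := Odist a b ac bc; have [D3 D4] := Odist b a bc ac.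
  rewrite /Pr; case/orP => /eqP ->; case/orP => /eqP H.
  - by apply/eqP; rewrite -D1 H.
  - by move: D2; rewrite H eqxx.
  - by move: D4; rewrite -H eqxx.
  - by apply/eqP; rewrite -D1 (oppr_inj H).
have gdv3 : forall x, gd x = gd v -> x *+ 3 != 0.
  move=> x /O1 [k _]; rewrite /Pr => /orP[] /eqP ->; by rewrite ?nzN3 nz3.
pose S := [set x : R | (x *+ 3 != 0) && (gd x != gd v)].
have SN : forall y, y \in S -> - y \in S by move=> y; rewrite !inE nzN3 gdN.
have S2 : forall y, y \in S -> two * y \in S by move=> y; rewrite !inE nz2 gd2.
have SH' : forall x, x \in S -> forall k, odd k ->
    (two ^+ k * x != x) && (two ^+ k * x != - x).
  by move=> x; rewrite inE => /andP[a b]; apply: SH.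
have fP := fcol_prop oN SN S2 SH'.
pose G1 := [set g : R | (g \in S) && ~~ fcol g && pos g].
pose G2 := [set g : R | [exists i : 'I_c, odd i && (g == two ^+ i * v)]].
pose G3 := [set g : R | (g *+ 3 == 0) && (g != 0) && pos g].
have G2P : forall g, g \in G2 -> exists2 i, (odd i && (i < c))%N & g = two ^+ i * v.
  by move=> g; rewrite inE => /existsP[i /andP[oi /eqP ->]]; exists i; rewrite ?oi ?ltn_ord.
have C1 : forall g x, g \in G1 -> x \in Dset g -> x \in S.
  move=> g x; rewrite inE => /andP[/andP[gS _] _]; exact: Dset_sub.
have C2 : forall g x, g \in G2 -> x \in Dset g -> gd x = gd v.
  move=> g x gG; case/G2P: gG => i _ -> xD.
  suff : x \in [set y | gd y == gd v] by rewrite inE => /eqP.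
  apply: (Dset_sub _ _ _ xD).
  - by move=> y; rewrite !inE gdN.
  - by move=> y; rewrite !inE gd2.
  - by rewrite inE gdX.
have C3 : forall g x, g \in G3 -> x \in Dset g -> x *+ 3 == 0.
  move=> g x gG xD; move: gG; rewrite inE => /andP[/andP[g3 _] _].
  suff : x \in [set y | y *+ 3 == 0] by rewrite inE.
  apply: (Dset_sub _ _ _ xD).
  - by move=> y; rewrite !inE nzN3.
  - by move=> y; rewrite !inE nz2.
  - by rewrite inE.
have HG0 : G1 :|: G2 :|: G3 != set0.
  apply/set0Pn; exists (two ^+ 1 * v); rewrite !in_setU; apply/orP; left; apply/orP; right.
  by rewrite inE; apply/existsP; exists (Ordinal c1); rewrite /= eqxx.
have HGn0 : forall g, g \in G1 :|: G2 :|: G3 -> g != 0.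
  move=> g /setUP[/setUP[|]|].
  - rewrite !inE => /andP[/andP[/andP[g3 _] _] _]; by apply: contra g3 => /eqP ->; rewrite mul0rn.
  - by move/G2P => [i _ ->]; rewrite unit_mul_eq0 // unitrX.
  - by rewrite inE => /andP[/andP[_ ->] _].
have HGv : forall g, g \in G1 :|: G2 :|: G3 -> v \notin Dset g.
  move=> g /setUP[/setUP[gG|gG]|gG]; apply/negP => vD.
  - by move: (C1 _ _ gG vD); rewrite inE eqxx andbF.
  - case/G2P: gG vD => i /andP[oi ic] -> /[!DsetO] /orP[] vP.
    + have := PrO 0%N i v ltac:(lia) ic _ vP; rewrite /Pr expr0 mul1r eqxx => /(_ isT); lia.
    + have := PrO 0%N i.+1 v ltac:(lia) ltac:(lia) _ vP; rewrite /Pr expr0 mul1r eqxx => /(_ isT); lia.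
  - by move: (C3 _ _ gG vD); rewrite (negbTE v3).
have G1P : forall y, y \in S -> ~~ fcol y -> posrep y \in G1.
  move=> y yS fy; rewrite inE posrep_pos andbT; case: (posrep_eq y) => ->.
    by rewrite yS fy.
  by rewrite SN // (fP y yS).2 fy.
have HGcov : forall x, x != 0 -> x != v -> x != - v ->
    exists2 g, g \in G1 :|: G2 :|: G3 & x \in Dset g.
  move=> x x0 xv xnv.
  case: (boolP (x *+ 3 == 0)) => x3.
    exists (posrep x); last by rewrite Dset_posrep DsetE eqxx.
    rewrite !in_setU; apply/orP; right; rewrite inE posrep_pos andbT.
    by case: (posrep_eq x) => ->; rewrite ?nzN3 x3 ?oppr_eq0 x0.
  case: (boolP (gd x == gd v)) => xO.
    have [k kc Pk] := O1 x (eqP xO).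
    have k0 : k != 0%N.
      apply: contraNneq xv => k0; move: Pk xnv; rewrite k0 /Pr expr0 mul1r.
      by case/orP => /eqP ->; rewrite ?eqxx.
    case: (boolP (odd k)) => ok.
      exists (two ^+ k * v); last by rewrite DsetO Pk.
      rewrite !in_setU; apply/orP; left; apply/orP; right.
      by rewrite inE; apply/existsP; exists (Ordinal kc); rewrite /= ok eqxx.
    have kc' : (k.-1 < c)%N by lia.
    exists (two ^+ k.-1 * v); last by rewrite DsetO prednK ?Pk ?orbT // lt0n.
    rewrite !in_setU; apply/orP; left; apply/orP; right.
    rewrite inE; apply/existsP; exists (Ordinal kc'); rewrite /= eqxx andbT; lia.
  have xS : x \in S by rewrite inE x3 xO.
  case: (boolP (fcol x)) => fx; last first.
    exists (posrep x); last by rewrite Dset_posrep DsetE eqxx.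
    by rewrite !in_setU G1P.
  pose y := two^-1 * x.
  have xy : x = two * y by rewrite /y mulrA mulrV // mul1r.
  have yS : y \in S.
    by move: xS; rewrite !inE xy nz2 gd2.
  have fy : ~~ fcol y by rewrite -(fP y yS).1 -xy.
  exists (posrep y); last by rewrite Dset_posrep DsetE xy eqxx !orbT.
  by rewrite !in_setU G1P.
have HGdis : forall g h, g \in G1 :|: G2 :|: G3 -> h \in G1 :|: G2 :|: G3 -> g != h ->
    forall x, x \in Dset g -> x \in Dset h -> False.
  move=> g h gG hG gh x xg xh.
  move: gG hG => /setUP[/setUP[gG|gG]|gG] /setUP[/setUP[hG|hG]|hG].
  - have G1E : forall y, y \in G1 -> [/\ y \in S, ~~ fcol y & pos y].
      by move=> y; rewrite inE => /andP[/andP[]].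
    case/G1E: gG => gS fg pg; case/G1E: hG => hS fh ph.
    have g0 : g != 0.
      by move: gS; rewrite inE => /andP[+ _]; apply: contra => /eqP ->; rewrite mul0rn.
    have h0 : h != 0.
      by move: hS; rewrite inE => /andP[+ _]; apply: contra => /eqP ->; rewrite mul0rn.
    have F1 : g != - h by apply: contra h0 => /eqP E; apply/eqP/pos_both; rewrite // -E.
    have F1' : h != - g by apply: contra g0 => /eqP E; apply/eqP/pos_both; rewrite // -E.
    have F2 : g != two * h by apply: contra fg => /eqP ->; rewrite (fP h hS).1 fh.
    have F2' : h != two * g by apply: contra fh => /eqP ->; rewrite (fP g gS).1 fg.
    have F3 : g != - (two * h).
      by apply: contra fg => /eqP ->; rewrite (fP _ (S2 h hS)).2 (fP h hS).1 fh.
    have F3' : h != - (two * g).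
      by apply: contra fh => /eqP ->; rewrite (fP _ (S2 g gS)).2 (fP g gS).1 fg.
    move: xg xh; rewrite !DsetE => /or4P[] /eqP -> /or4P[] /eqP E.
    + by move: gh; rewrite E eqxx.
    + by move: F1; rewrite E eqxx.
    + by move: F2; rewrite E eqxx.
    + by move: F3; rewrite E eqxx.
    + by move: F1'; rewrite -E eqxx.
    + by move: gh; rewrite (oppr_inj E) eqxx.
    + by move: F3; rewrite -E opprK eqxx.
    + by move: F2; rewrite (oppr_inj E) eqxx.
    + by move: F2'; rewrite -E eqxx.
    + by move: F3'; rewrite E opprK eqxx.
    + by move: gh; rewrite (two_cancel oN E) eqxx.
    + by move: F1; rewrite -mulrN in E; rewrite (two_cancel oN E) eqxx.
    + by move: F3'; rewrite -E eqxx.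
    + by move: F2'; rewrite -(oppr_inj E) eqxx.
    + have E' : two * g = two * (- h) by rewrite mulrN -E opprK.
      by move: F1; rewrite (two_cancel oN E') eqxx.
    + by move: gh; rewrite (two_cancel oN (oppr_inj E)) eqxx.
  - by have := C1 _ _ gG xg; rewrite inE (C2 _ _ hG xh) eqxx andbF.
  - by have := C1 _ _ gG xg; rewrite inE (C3 _ _ hG xh).
  - by have := C1 _ _ hG xh; rewrite inE (C2 _ _ gG xg) eqxx andbF.
  - case/G2P: gG => i /andP[oi ic] gE; case/G2P: hG => j /andP[oj jc] hE.
    have ij : i != j by apply: contraNneq gh => E; rewrite gE hE E.
    have ic1 : (i.+1 < c)%N by lia.
    have jc1 : (j.+1 < c)%N by lia.
    move: xg xh; rewrite gE hE !DsetO => /orP[] P1 /orP[] P2.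
    + by move: (PrO i j x ic jc P1 P2); lia.
    + by move: (PrO i j.+1 x ic jc1 P1 P2); lia.
    + by move: (PrO i.+1 j x ic1 jc P1 P2); lia.
    + by move: (PrO i.+1 j.+1 x ic1 jc1 P1 P2); lia.
  - by have := gdv3 _ (C2 _ _ gG xg); rewrite (C3 _ _ hG xh).
  - by have := C1 _ _ hG xh; rewrite inE (C3 _ _ gG xg).
  - by have := gdv3 _ (C2 _ _ hG xh); rewrite (C3 _ _ gG xg).
  - move: gG hG; rewrite !inE => /andP[/andP[g3 g0] pg] /andP[/andP[h3 h0] ph].
    have tg : two * g = - g by apply/eqP; rewrite -addr_eq0 mulr_natl -mulrSr.
    have th : two * h = - h by apply/eqP; rewrite -addr_eq0 mulr_natl -mulrSr.
    have F1 : g != - h by apply: contra h0 => /eqP E; apply/eqP/pos_both; rewrite // -E.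
    have F1' : h != - g by apply: contra g0 => /eqP E; apply/eqP/pos_both; rewrite // -E.
    move: xg xh; rewrite !DsetE tg th !opprK => /or4P[] /eqP -> /or4P[] /eqP E;
    first [ by move: gh; rewrite E eqxx
          | by move: gh; rewrite (oppr_inj E) eqxx
          | by move: F1; rewrite E eqxx
          | by move: F1'; rewrite -E eqxx ].
exact: (core oN v0 HG0 HGn0 HGdis HGcov HGv).
Qed.

End Build.

Lemma dvd_gcd_cancel (N a m : nat) : 0 < N -> N %| m * a -> N %/ gcdn a N %| m.
Proof.
move=> N0 H; set d := gcdn a N.
have d0 : 0 < d by rewrite gcdn_gt0 N0 orbT.
have Nd : N = N %/ d * d by rewrite divnK // dvdn_gcdr.
have ad : a = a %/ d * d by rewrite divnK // dvdn_gcdl.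
have co : coprime (N %/ d) (a %/ d).
  by rewrite /coprime -(eqn_pmul2r d0) mul1n muln_gcdl -Nd -ad gcdnC.
rewrite -(Gauss_dvdl _ co) -(dvdn_pmul2r d0) -mulnA -ad -Nd.
exact: H.
Qed.

Section Final.
Local Open Scope ring_scope.
Variable N' : nat.
Local Notation N := N'.+2.
Local Notation R := 'I_N.
Hypothesis oN : odd N.

Lemma RnatE (a b : nat) : ((a%:R : R) == b%:R) = (a == b %[mod N])%N.
Proof. exact: (@ZpnatE N). Qed.

Lemma Rnat0 (a : nat) : ((a%:R : R) == 0) = (N %| a)%N.
Proof. exact: (@Zpnat0 N). Qed.

Lemma RnatN (a b : nat) : ((a%:R : R) == - b%:R) = (N %| a + b)%N.
Proof. by rewrite -Rnat0 natrD -subr_eq0 opprK. Qed.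

Lemma natr3 (a : nat) : (a%:R : R) *+ 3 = (a * 3)%N%:R.
Proof. by rewrite natrM mulr_natr. Qed.

Lemma valR (x : R) : x = (val x)%:R.
Proof. by rewrite natr_Zp. Qed.

Lemma final_ring (n0 c : nat) : (n0 %| N)%N -> (3 < n0)%N -> (1 < c)%N -> odd c ->
  (forall j, (0 < j < c)%N -> ~~ (n0 %| 2 ^ j - 1)%N && ~~ (n0 %| 2 ^ j + 1)%N) ->
  (forall u, (0 < u < n0)%N -> coprime u n0 ->
     exists2 k, (k < c)%N & (u == 2 ^ k %[mod n0])%N || (n0 %| u + 2 ^ k)%N) ->
  (forall n, (n %| N)%N -> forall k, odd k -> (n %| 2 ^ k - 1)%N || (n %| 2 ^ k + 1)%N ->
     [\/ n = 1, n = 3 | n = n0]%N) ->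
  exists C : {set {set R}}, [/\ is_CAC 3 C, equi_difference 3 C, #|leave C| = 2%N &
     ~ ((3 %| N)%N /\ forall x : R,
         (x \in leave C) = ((val x == N %/ 3)%N || (val x == 2 * (N %/ 3))%N))].
Proof.
move=> n0N n03 c1 oc Hii Hiii NT.
set v0 := (N %/ n0)%N.
have Nv : N = (n0 * v0)%N by rewrite /v0 mulnC divnK.
have v0p : (0 < v0)%N.
  rewrite lt0n; apply/eqP => v00; move: Nv; rewrite v00 muln0; by [].
have v0N : (4 * v0 <= N)%N.
  by rewrite Nv [(4 * v0)%N]mulnC [(n0 * v0)%N]mulnC leq_mul2l n03 orbT.
pose v : R := v0%:R.
have vv : val v = v0.
  have H := @val_Zp_nat N isT v0; rewrite modn_small in H; last by lia.
  exact: H.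
have gdv : gd v = v0.
  by rewrite /gd vv; apply/gcdn_idPl; rewrite Nv dvdn_mull.
have n0odd : odd n0 by move: oN; rewrite Nv oddM => /andP[].
have co2 : forall i, coprime n0 (2 ^ i) by move=> i; rewrite coprimeXr // coprimen2.
have vN : ~~ (N %| v0)%N by apply/negP => /(dvdn_leq v0p); lia.
have [C [HC1 HC2 HL]] : exists C : {set {set R}},
    [/\ is_CAC 3 C, equi_difference 3 C & leave C = [set v; -v]].
  apply: (buildG oN (v:=v) (c:=c)) => //.
  - rewrite /v natr3 Rnat0; apply/negP => /(dvdn_leq _) H.
    have : (0 < v0 * 3)%N by rewrite muln_gt0 v0p.
    by move/H; lia.
  - move=> x gx; rewrite gdv in gx; set a := val x.
    have va : (v0 %| a)%N by rewrite -gx dvdn_gcdl.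
    set u := (a %/ v0)%N.
    have au : a = (u * v0)%N by rewrite divnK.
    have un : (u < n0)%N.
      by rewrite -(ltn_pmul2r v0p) -au -Nv; apply: ltn_ord.
    have u0 : (0 < u)%N.
      rewrite lt0n; apply/eqP => u00; move: gx; rewrite /gd -/a au u00 mul0n gcd0n => E.
      have : (n0 * v0 == 1 * v0)%N by rewrite mul1n -Nv E.
      by rewrite eqn_pmul2r // => /eqP; lia.
    have cu : coprime u n0.
      rewrite /coprime -(eqn_pmul2r v0p) mul1n muln_gcdl -au -Nv.
      by apply/eqP; exact: gx.
    have [k kc hk] := Hiii u (introT andP (conj u0 un)) cu.
    exists k => //.
    rewrite /Pr (valR x) /v -natrX -natrM RnatE RnatN -/a.
    case/orP: hk => hk; apply/orP; [left|right].
      by rewrite au Nv -!muln_modl (eqP hk).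
    by rewrite au Nv -mulnDl dvdn_pmul2r.
  - move=> i j /andP[ij jc].
    have ji : (2 ^ j = 2 ^ i * 2 ^ (j - i))%N by rewrite -expnD subnKC // ltnW.
    have Em : (2 ^ j - 2 ^ i = 2 ^ i * (2 ^ (j - i) - 1))%N by rewrite ji mulnBr muln1.
    have Ep : (2 ^ i + 2 ^ j = 2 ^ i * (2 ^ (j - i) + 1))%N by rewrite ji mulnDr muln1 addnC.
    have Hj := Hii (j - i)%N ltac:(lia).
    case/andP: Hj => Hj1 Hj2.
    rewrite /v -!natrX -!natrM RnatE RnatN; apply/andP; split.
      rewrite eq_sym eqn_mod_dvd; last by rewrite leq_mul2r leq_exp2l // (ltnW ij) orbT.
      rewrite -mulnBl Em Nv mulnC [X in (_ %| X)%N]mulnC.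
      by rewrite dvdn_pmul2l // Gauss_dvdr.
    rewrite -mulnDl Ep Nv mulnC [X in (_ %| X)%N]mulnC.
    by rewrite dvdn_pmul2l // Gauss_dvdr.
  - move=> x x3 gx k ok; rewrite gdv in gx.
    set a := val x.
    have aN : (a < N)%N by apply: ltn_ord.
    have key : (N %| (2 ^ k - 1) * a)%N || (N %| (2 ^ k + 1) * a)%N -> False.
      move=> H.
      set d := gcdn a N.
      have d0 : (0 < d)%N by rewrite gcdn_gt0 orbT.
      have Nd : N = (N %/ d * d)%N by rewrite divnK // dvdn_gcdr.
      have nN : (N %/ d %| N)%N by rewrite {2}Nd dvdn_mulr.
      have Hn : (N %/ d %| 2 ^ k - 1)%N || (N %/ d %| 2 ^ k + 1)%N.
        by case/orP: H => H; apply/orP; [left|right]; apply: dvd_gcd_cancel.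
      case: (NT _ nN k ok Hn) => E.
      - have dN : d = N by rewrite {1}Nd E mul1n.
        have Na : (N %| a)%N by rewrite -dN dvdn_gcdl.
        case: (posnP a) => a0.
          by move: x3; rewrite (valR x) -/a a0 mul0rn eqxx.
        by have := dvdn_leq a0 Na; lia.
      - move: x3; rewrite (valR x) -/a natr3 Rnat0 => /negP; apply.
        by rewrite {1}Nd E [(3 * d)%N]mulnC dvdn_pmul2r // dvdn_gcdl.
      - move: gx; rewrite /gd -/a -/d => /negP; apply.
        have : (n0 * d = n0 * v0)%N by rewrite -Nv -E divnK // dvdn_gcdr.
        by move/eqP; rewrite eqn_pmul2l //; lia.
    rewrite (valR x) -/a -natrX -natrM RnatE RnatN; apply/andP; split; apply/negP => H; apply: key.
      apply/orP; left; move: H; rewrite eqn_mod_dvd.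
        by rewrite mulnBl mul1n.
      by rewrite leq_pmull // expn_gt0.
    by apply/orP; right; rewrite mulnDl mul1n.
exists C; split => //.
  rewrite HL cards2 neq_opp //.
  by rewrite /v Rnat0.
move=> [d3 Hx].
have := Hx v; rewrite HL !inE eqxx /= vv.
have q3 : (N %/ 3 * 3 = N)%N by rewrite divnK.
move/esym => /orP[] /eqP E; lia.
Qed.

End Final.

Section Glue.
Variables (m : nat) (p r : nat -> nat).
Hypothesis Hprime : forall i, i < m -> prime (p i).
Hypothesis Hincr : forall i j, i < j -> j < m -> p i < p j.

Lemma pinj i j : i < m -> j < m -> p i = p j -> i = j.
Proof.
move=> im jm E; case: (ltngtP i j) => // H.
- by have := Hincr H jm; rewrite E ltnn.
- by have := Hincr H im; rewrite E ltnn.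
Qed.

Lemma Lp (a : pred nat) q : prime q -> q %| \prod_(i < m | a i) p i ^ r i ->
  exists i, [/\ i < m, a i & q = p i].
Proof.
move=> pq.
pose K x := q %| x -> exists i, [/\ i < m, a i & q = p i].
apply: (@big_ind _ K) => [|x y Kx Ky|i ai].
- by rewrite /K dvdn1 => /eqP q1; move: pq; rewrite q1.
- by rewrite /K Euclid_dvdM // => /orP[/Kx|/Ky].
- rewrite /K Euclid_dvdX // => /andP[H _]; exists i; split => //.
  by apply/eqP; rewrite -dvdn_prime2 // Hprime.
Qed.

Lemma NTgen L A M : L = A * M -> 0 < L ->
  (forall q, prime q -> q %| M -> star q) ->
  forall n k, n %| L -> odd k -> (n %| 2 ^ k - 1) || (n %| 2 ^ k + 1) -> n %| A.
Proof.
move=> LAM L0 HM n k nL ok Hn.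
have M0 : 0 < M by move: L0; rewrite LAM muln_gt0 => /andP[].
have co : coprime n M.
  rewrite /coprime; apply/negP => g1.
  have g0 : 0 < gcdn n M by rewrite gcdn_gt0 M0 orbT.
  have g2 : 1 < gcdn n M by lia.
  set q := pdiv (gcdn n M).
  have pq : prime q by apply: pdiv_prime.
  have qn : q %| n := dvdn_trans (pdiv_dvd _) (dvdn_gcdl n M).
  have qM : q %| M := dvdn_trans (pdiv_dvd _) (dvdn_gcdr n M).
  have := star_no pq (HM q pq qM) ok.
  rewrite Zp_sub1 ?Zp_add1 ?prime_gt1 //.
  by case/orP: Hn => H /andP[/negP H1 /negP H2]; [apply: H1|apply: H2]; apply: dvdn_trans H.
by rewrite -(Gauss_dvdl _ co) -LAM.
Qed.

End Glue.

Section Facts.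
Local Open Scope ring_scope.

Lemma prime_O_facts q : prime q -> odd q -> (3 < q)%N -> ~~ star q ->
  subord2 q = ((q - 1) %/ 2)%N ->
  [/\ (1 < (q - 1) %/ 2)%N, odd ((q - 1) %/ 2),
      (forall j, (0 < j < (q - 1) %/ 2)%N -> ~~ (q %| 2 ^ j - 1)%N && ~~ (q %| 2 ^ j + 1)%N) &
      (forall u, (0 < u < q)%N -> coprime u q ->
         exists2 k, (k < (q - 1) %/ 2)%N & (u == 2 ^ k %[mod q])%N || (q %| u + 2 ^ k)%N)].
Proof.
move=> pq oq q3 ns sc; have q1 : (1 < q)%N by apply: prime_gt1.
split.
- lia.
- exact: nonstar_odd.
- have le : (subord2 q <= q)%N by lia.
  have [_ Hs] := subord2_facts pq le.
  by move=> j; rewrite -sc => /Hs; rewrite Zp_sub1 // Zp_add1.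
- move=> u uq _; have [k [kc H]] := pigeon pq oq sc uq.
  exists k => //; case: H => /eqP H; apply/orP; [left|right].
    by move: H; rewrite -natrX ZpnatE.
  by move: H; rewrite -natrX -subr_eq0 opprK -natrD Zpnat0.
Qed.

Lemma three_odd k : odd k -> ~~ (3 %| 2 ^ k - 1)%N.
Proof.
move=> ok; rewrite -(@Zp_sub1 3) //.
have -> : (2%:R : 'Z_3) = -1 by apply/val_inj.
by rewrite -signr_odd ok.
Qed.

End Facts.

Theorem mainTheorem12 (L m : nat) (p r : nat -> nat)
  (Hm : 0 < m)
  (Hprime : forall i, i < m -> prime (p i))
  (Hincr : forall i j, i < j -> j < m -> p i < p j)
  (Hr : forall i, i < m -> 0 < r i)
  (HL : L = \prod_(i < m) p i ^ r i)
  (Hodd : odd L) :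
  [\/ (3 < p 0 /\
       exists2 t, t < m &
         [/\ subord2 (p t) = (p t - 1) %/ 2, r t = 1, ~~ star (p t) &
             forall i, i < m -> i != t -> star (p i)]),
      (p 0 = 3 /\ r 0 = 1 /\
       exists2 t, 1 <= t < m &
         [/\ subord2 (p t) = (p t - 1) %/ 2, ord2 (p t) = (p t - 1) %/ 2,
             r t = 1, ~~ star (p t) &
             forall i, 1 <= i < m -> i != t -> star (p i)])
    | (p 0 = 3 /\ r 0 = 2 /\ forall i, 1 <= i < m -> star (p i))] ->
  exists C : {set {set 'I_L}},
    [/\ is_CAC 3 C, equi_difference 3 C, #|leave C| = 2 &
        ~ (3 %| L /\
           forall x : 'I_L, (x \in leave C) = ((val x == L %/ 3) || (val x == 2 * (L %/ 3))))].
Proof.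
move=> Hcase.
have L0 : 0 < L by case: L Hodd HL.
have fdvd : forall i, i < m -> p i ^ r i %| L.
  by move=> i im; rewrite HL (bigD1 (Ordinal im)) //= dvdn_mulr.
have pdvd : forall i, i < m -> p i %| L.
  by move=> i im; apply: dvdn_trans (fdvd i im); apply: dvdn_exp => //; apply: Hr.
have podd : forall i, i < m -> odd (p i) by move=> i im; apply: dvdn_odd (pdvd i im) Hodd.
have L1 : 1 < L.
  have := dvdn_leq L0 (pdvd 0 Hm); have := prime_gt1 (Hprime 0 Hm); lia.
have pgt : forall t, t < m -> p 0 <= p t.
  by move=> t tm; case: (posnP t) => [->|t0] //; apply/ltnW/Hincr.
suff Main : exists n0 c, [/\ n0 %| L, 3 < n0, 1 < c & odd c] /\ [/\
    (forall j, 0 < j < c -> ~~ (n0 %| 2 ^ j - 1) && ~~ (n0 %| 2 ^ j + 1)),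
    (forall u, 0 < u < n0 -> coprime u n0 ->
       exists2 k, k < c & (u == 2 ^ k %[mod n0]) || (n0 %| u + 2 ^ k)) &
    (forall n, n %| L -> forall k, odd k -> (n %| 2 ^ k - 1) || (n %| 2 ^ k + 1) ->
       [\/ n = 1, n = 3 | n = n0])].
  clear -Main Hodd L1.
  case: L Main Hodd L1 => [|[|N']] // Main Hodd _.
  have [n0 [c [[H1 H2 H3 H4] [H5 H6 H7]]]] := Main.
  exact: (final_ring Hodd H1 H2 H3 H4 H5 H6 H7).
case: Hcase => [[p03 [t tm [Hs Hrt Hns Hst]]]
               |[p03 [r01 [t /andP[t1 tm] [Hs Ho Hrt Hns Hst]]]]
               |[p03 [r02 Hst]]].
- have pt := Hprime t tm; have ot := podd t tm.
  have pt3 : 3 < p t by have := pgt t tm; lia.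
  have [c1 oc Hii Hiii] := prime_O_facts pt ot pt3 Hns Hs.
  set M := \prod_(i < m | (i : nat) != t) p i ^ r i.
  have LAM : L = p t * M.
    rewrite HL (bigD1 (Ordinal tm)) //= Hrt expn1 /M; congr (_ * _).
  have HM : forall q, prime q -> q %| M -> star q.
    move=> q pq qM; have [i [im it ->]] := @Lp m p r Hprime (fun i => i != t) q pq qM.
    exact: Hst.
  exists (p t), ((p t - 1) %/ 2); split; split => //.
    by rewrite LAM dvdn_mulr.
  move=> n nL k ok Hn; have nA := NTgen LAM L0 HM nL ok Hn.
  case: (n =P 1) => [->|n1]; first by constructor 1.
  by constructor 3; apply/(prime_nt_dvdP pt) => //; apply/eqP.
- have pt := Hprime t tm; have ot := podd t tm.
  have pt3 : 3 < p t by rewrite -p03; apply: Hincr.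
  have [c1 oc Hii Hiii] := prime_O_facts pt ot pt3 Hns Hs.
  set M := \prod_(i < m | ((i : nat) != 0) && ((i : nat) != t)) p i ^ r i.
  have LAM : L = (3 * p t) * M.
    rewrite HL (bigD1 (Ordinal Hm)) //= (bigD1 (Ordinal tm)) /=; last first.
      by rewrite -val_eqE /=; lia.
    rewrite p03 r01 Hrt !expn1 mulnA /M; congr (_ * _).
    all: try by apply: eq_bigl => i; rewrite -!val_eqE.
  have HM : forall q, prime q -> q %| M -> star q.
    move=> q pq qM.
    have [i [im /andP[i0 it] ->]] := @Lp m p r Hprime (fun i => (i != 0) && (i != t)) q pq qM.
    by apply: Hst => //; rewrite im andbT lt0n.
  exists (p t), ((p t - 1) %/ 2); split; split => //.
    by rewrite LAM mulnC mulnA dvdn_mull.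
  move=> n nL k ok Hn; have nA := NTgen LAM L0 HM nL ok Hn.
  case: (boolP (3 %| n)) => n3.
    have [n' nE] : exists n', n = 3 * n' by exists (n %/ 3); rewrite mulnC divnK.
    rewrite nE dvdn_pmul2l // in nA.
    case: (n' =P 1) => [n'1|n'1]; first by constructor 2; rewrite nE n'1.
    have n'p : n' = p t by apply/(prime_nt_dvdP pt) => //; apply/eqP.
    exfalso; case/orP: Hn => Hn.
      by move: (three_odd ok); rewrite (dvdn_trans n3 Hn).
    have : p t %| 2 ^ k + 1 by apply: dvdn_trans Hn; rewrite nE n'p dvdn_mull.
    rewrite -Zp_add1 ?prime_gt1 //; apply/negP; apply: caseb_nom1 => //.
  have co3 : coprime n 3 by rewrite coprime_sym prime_coprime.
  rewrite Gauss_dvdr // in nA.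
  case: (n =P 1) => [->|n1]; first by constructor 1.
  by constructor 3; apply/(prime_nt_dvdP pt) => //; apply/eqP.
- set M := \prod_(i < m | (i : nat) != 0) p i ^ r i.
  have LAM : L = 9 * M.
    rewrite HL (bigD1 (Ordinal Hm)) //= p03 r02 /M; congr (_ * _).
    all: try by apply: eq_bigl => i; rewrite -!val_eqE.
  have HM : forall q, prime q -> q %| M -> star q.
    move=> q pq qM; have [i [im i0 ->]] := @Lp m p r Hprime (fun i => i != 0) q pq qM.
    by apply: Hst; rewrite im andbT lt0n.
  exists 9, 3; split; split => //.
  - by rewrite LAM dvdn_mulr.
  - by move=> j /andP[j0 j3]; case: j j0 j3 => [|[|[|j]]].
  - move=> u /andP[u0 u9] cu.
    case: u u0 u9 cu => [|[|[|[|[|[|[|[|[|u]]]]]]]]] //= _ _ _;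
    first [by exists 0 | by exists 1 | by exists 2].
  - move=> n nL k ok Hn; have nA := NTgen LAM L0 HM nL ok Hn.
    have n9 := dvdn_leq (isT : 0 < 9) nA.
    clear nL Hn; case: n nA n9 => [|[|[|[|[|[|[|[|[|[|n]]]]]]]]]] //= _ _;
    first [by constructor 1 | by constructor 2 | by constructor 3].
Qed.
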